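(* Assume the zero-derivation setting $\delta=0$ and write $\mathbb{F}_{q^m}[x;\theta]$ for the skew polynomial ring. Let $s\ge1$, $\boldsymbol\xi=(\xi_1,\dots,\xi_\ell)$ representatives of pairwise distinct nontrivial conjugacy classes, $\mathbf n$ a length partition of $n$, $\boldsymbol\beta_1,\dots,\boldsymbol\beta_s\in\mathbb{F}_{q^m}^n$ with each block having $\mathbb{F}_q$-linearly independent entries, and $\mathbf c$ a codeword of the corresponding HILRS code of interleaving order $s$ and dimension $sk$ with message-polynomial vector $(f_1,\dots,f_s)$. Let $\mathbf y=\mathbf c+\mathbf e$ with $\mathrm{wt}_{\Sigma R}(\mathbf e)=t\le\frac{s}{s+1}(n-k)$, let $\sigma$ be the error-span polynomial of $\mathbf e$, and let $G_j,R_j$ ($j=1,\dots,s$) be the minimal and interpolation polynomials defined in the context. Let $\chi_1,\dots,\chi_s\in\mathbb{F}_{q^m}[x;\theta]$ be the skew polynomials with $\sigma f_j=\chi_jG_j+\sigma R_j$ for all $j$. Put $$\mathbf W=\begin{pmatrix}-\mathbf I_s\\ \mathbf R\\ \mathbf G\end{pmatrix}\in\mathbb{F}_{q^m}[x;\theta]^{(2s+1)\times s},\quad \mathbf R=(R_1,\dots,R_s),\ \mathbf G=\mathrm{diag}(G_1,\dots,G_s),$$ $\boldsymbol\rho=(\sigma f_1,\dots,\sigma f_s,\sigma)$, $\boldsymbol\chi=(\chi_1,\dots,\chi_s)$, $\mathbf w=(0,\dots,0,k-1)\in\mathbb Z^{s+1}$, $\mathbf v=(0,\dots,0,k-1,0,\dots,0)\in\mathbb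 Z^{2s+1}$ (the entry $k-1$ in position $s+1$), $D=\frac{s}{s+1}(n-k)$ and $d=D+n$. Then $$(\boldsymbol\rho\mid\boldsymbol\chi)\mathbf W=\mathbf 0\ \text{ and }\ \mathrm{rdeg}_{\mathbf w}(\boldsymbol\rho)<D$$ if and only if $$(\boldsymbol\rho\mid\boldsymbol\chi)\mathbf W\equiv\mathbf 0\bmod_r x^d\ \text{ and }\ \mathrm{rdeg}_{\mathbf v}(\boldsymbol\rho\mid\boldsymbol\chi)<D.$$
   Context: $q$ a prime power, $m\ge1$, $\theta$ an automorphism of $\mathbb{F}_{q^m}$ with fixed field $\mathbb{F}_q$. $\mathbb{F}_{q^m}[x;\theta]$: skew polynomials $\sum_if_ix^{i-1}$ with multiplication rule $xa=\theta(a)x$. Elements $a,b$ are conjugate if $b=\theta(c)ac^{-1}$ for some $c\ne0$; the class of $0$ is trivial. Generalized operator evaluation: $\mathcal D_a(b)=\theta(b)a$, $\mathcal D_a^0(b)=b$, $\mathcal D_a^i=\mathcal D_a\circ\mathcal D_a^{i-1}$, $f(b)_a=\sum_if_i\mathcal D_a^{i-1}(b)$; a length partition $\mathbf n=(n_1,\dots,n_\ell)$ of $n$ splits vectors into blocks $\mathbf x^{(i)}\in\mathbb{F}_{q^m}^{n_i}$, and $f(\mathbf x)_{\mathbf a}=(f(\mathbf x^{(1)})_{a_1}\mid\dots\mid f(\mathbf x^{(\ell)})_{a_\ell})$ entrywise. HILRS code: all $(\mathbf c_1\mid\dots\mid\mathbf c_s)\in\mathbb{F}_{q^m}^{sn}$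 with $\mathbf c_j=f_j(\boldsymbol\beta_j)_{\boldsymbol\xi}$ for some $f_j$ of degree $<k$; $(f_1,\dots,f_s)$ is the message-polynomial vector. Sum-rank weight of $\mathbf x=(\mathbf x_1\mid\dots\mid\mathbf x_s)$: $\sum_i\mathrm{rk}_q(\mathbf x_1^{(i)}\mid\dots\mid\mathbf x_s^{(i)})$ ($\mathrm{rk}_q$ = max number of $\mathbb{F}_q$-linearly independent entries). Error values: with $t_i=\mathrm{rk}_q(\mathbf e_1^{(i)}\mid\dots\mid\mathbf e_s^{(i)})$, choose $\mathbf a^{(i)}\in\mathbb{F}_{q^m}^{t_i}$ with $\mathbb{F}_q$-linearly independent entries and $\mathbf B_j^{(i)}\in\mathbb{F}_q^{t_i\times n_i}$ with $\mathbf e_j^{(i)}=\mathbf a^{(i)}\mathbf B_j^{(i)}$ and $\mathrm{rk}(\mathbf B_1^{(i)}\mid\dots\mid\mathbf B_s^{(i)})=t_i$; the error-span polynomial $\sigma$ is the monic nonzero skew polynomial of least degree with $\sigma(\mathbf a^{(i)})_{\xi_i}=\mathbf 0$ for all $i$. $G_j$ is the monic nonzero skew polynomial of least degree with $G_j(\boldsymbol\beta_j)_{\boldsymbol\xi}=\mathbf 0$; $R_j$ is the unique skew polynomial of degree $<n$ with $R_j(\boldsymbol\beta_j)_{\boldsymbol\xi}=\mathbf y_j$. For a shift $\mathbf v\in\mathbb Z^a$ and $\mathbf b\in\mathbb{F}_{q^m}[x;\theta]^a$, the $\mathbf v$-shifted row degree is $\mathrm{rdeg}_{\mathbf v}(\mathbf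 b)=\max_j(\deg b_j+v_j)$ (with $\deg 0=-\infty$). For a vector, $\equiv\mathbf 0\bmod_r x^d$ means every entry has remainder $0$ upon right division by $x^d$. *)

(* Defs.v *)
(* Skew polynomials F_{q^m}[x;theta] (delta = 0) are represented
   by their coefficient lists, i.e. by {poly L} used only as a coefficient carrier,
   equipped with the skew multiplication [skmul] (x a = theta(a) x). *)
From HB Require Import structures.
From mathcomp Require Import all_boot all_order all_algebra.
Set Implicit Arguments. Unset Strict Implicit. Unset Printing Implicit Defensive.
Import Order.TTheory GRing.Theory Num.Theory.
Local Open Scope ring_scope.

Section Skew.
Variable L : finFieldType.
Variable th : {rmorphism L -> L}.

Definition skmul (f g : {poly L}) : {poly L} :=
  \poly_(k < (size f + size g).-1) \sum_(i < k.+1) f`_i * iter i th g`_(k - i).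

Definition Dop (a : L) (i : nat) (b : L) : L := iter i (fun z => th z * a) b.
Definition skev (f : {poly L}) (b a : L) : L := \sum_(i < size f) f`_i * Dop a i b.
Definition skevrow N (f : {poly L}) (x : 'rV[L]_N) (a : L) : 'rV[L]_N :=
  \row_p skev f (x 0 p) a.

Definition conjugate (a b : L) : Prop := exists c, c != 0 /\ b = th c * a / c.

(* the fixed field F_q of theta *)
Definition fixedb (a : L) : bool := th a == a.

Definition fq_indep (v : seq L) : bool :=
  [forall c : (size v).-tuple L,
     (all fixedb c && (\sum_(i < size v) c`_i * v`_i == 0)) ==> all (eq_op^~ 0) c].

Definition rkq (I : finType) (x : I -> L) : nat :=
  \max_(S : {set I} | fq_indep [seq x i | i <- enum S]) #|S|.

Definition sr_wt (s l : nat) (nn : 'I_l -> nat)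
    (e : 'I_s -> forall i : 'I_l, 'rV[L]_(nn i)) : nat :=
  \sum_(i < l) rkq (fun p : 'I_s * 'I_(nn i) => e p.1 i ord0 p.2).

Definition rmod_zero (d : nat) (f : {poly L}) : Prop :=
  exists Q : {poly L}, f = skmul Q 'X^d.

Definition vecmul a s (u : 'I_a -> {poly L}) (W : 'I_a -> 'I_s -> {poly L})
  : 'I_s -> {poly L} := fun j => \sum_(r < a) skmul (u r) (W r j).

Definition rho_vec s (sigma : {poly L}) (f : 'I_s -> {poly L}) : 'I_s.+1 -> {poly L} :=
  fun r => if insub (val r) is Some j then skmul sigma (f j) else sigma.

Definition rhochi_vec s (sigma : {poly L}) (f chi : 'I_s -> {poly L})
  : 'I_(2 * s).+1 -> {poly L} :=
  fun r => if insub (val r) is Some j then skmul sigma (f j)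
           else if val r == s then sigma
           else if insub (val r - s.+1)%N is Some j then chi j else 0.
End Skew.

(* shifted row degree strictly below D (deg 0 = -oo) :
   rdeg_v(b) = max_j (deg b_j + v_j) < D *)
Definition rdeg_lt (L : fieldType) a (v : 'I_a -> int) (b : 'I_a -> {poly L}) (D : rat)
  : Prop :=
  forall j, b j != 0 -> (((size (b j)).-1)%:Z + v j)%:~R < D.

Definition W_mat (L : fieldType) s (R G : 'I_s -> {poly L}) : 'I_(2 * s).+1 -> 'I_s -> {poly L} :=
  fun r j => if (val r < s)%N then (if val r == val j then -1 else 0)
             else if val r == s then R j
             else if (val r - s.+1)%N == val j then G j else 0.

Definition w_shift s (k : nat) : 'I_s.+1 -> int :=
  fun r => if val r == s then k%:Z - 1 else 0.
(* v = (0,...,0,k-1,0,...,0) in Z^(2s+1), k-1 in position s+1 (1-indexed) *)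
Definition v_shift s (k : nat) : 'I_(2 * s).+1 -> int :=
  fun r => if val r == s then k%:Z - 1 else 0.

(* Main.v *)
Require Import Defs.
From HB Require Import structures.
From mathcomp Require Import all_boot all_order all_algebra.
From mathcomp Require Import ring zify.
Import Order.TTheory GRing.Theory Num.Theory.
Local Open Scope ring_scope.

Lemma iter_th0 (L : finFieldType) (th : {rmorphism L -> L}) i : iter i th 0 = 0.
Proof. by elim: i => //= i ->; rewrite rmorph0. Qed.
Lemma iter_thN1 (L : finFieldType) (th : {rmorphism L -> L}) i : iter i th (-1) = -1.
Proof. by elim: i => //= i ->; rewrite rmorphN1. Qed.
Lemma iter_thM (L : finFieldType) (th : {rmorphism L -> L}) i x y :
  iter i th (x * y) = iter i th x * iter i th y.
Proof. by elim: i => //= i ->; rewrite rmorphM. Qed.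
Lemma iter_th_neq0 (L : finFieldType) (th : {rmorphism L -> L}) i x :
  x != 0 -> iter i th x != 0.
Proof. by move=> x0; elim: i => //= i IH; rewrite fmorph_eq0. Qed.
Lemma iter_fixed (L : finFieldType) (th : {rmorphism L -> L}) i x :
  fixedb th x -> iter i th x = x.
Proof. by move=> /eqP fx; elim: i => //= i ->. Qed.

Lemma DopS (L : finFieldType) (th : {rmorphism L -> L}) a i b :
  Dop th a i.+1 b = th (Dop th a i b) * a.
Proof. by rewrite /Dop iterS. Qed.
Lemma DopSr (L : finFieldType) (th : {rmorphism L -> L}) a i b :
  Dop th a i.+1 b = Dop th a i (th b * a).
Proof. by rewrite /Dop iterSr. Qed.
Lemma DopD (L : finFieldType) (th : {rmorphism L -> L}) a i x y :
  Dop th a i (x + y) = Dop th a i x + Dop th a i y.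
Proof. by elim: i => // i IH; rewrite !DopS IH rmorphD mulrDl. Qed.
Lemma Dop0 (L : finFieldType) (th : {rmorphism L -> L}) a i : Dop th a i 0 = 0.
Proof. by elim: i => // i IH; rewrite DopS IH rmorph0 mul0r. Qed.
Lemma DopN (L : finFieldType) (th : {rmorphism L -> L}) a i x :
  Dop th a i (- x) = - Dop th a i x.
Proof. by apply/eqP; rewrite -subr_eq0 opprK -DopD addNr Dop0. Qed.
Lemma DopM (L : finFieldType) (th : {rmorphism L -> L}) a i u z :
  Dop th a i (u * z) = iter i th u * Dop th a i z.
Proof. by elim: i => // i IH; rewrite !DopS IH rmorphM /= mulrA. Qed.

Lemma skev_widen (L : finFieldType) (th : {rmorphism L -> L}) (g : {poly L}) (z a : L) N :
  (size g <= N)%N -> skev th g z a = \sum_(i < N) g`_i * Dop th a i z.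
Proof.
move=> le; rewrite /skev (big_ord_widen _ (fun i => g`_i * Dop th a i z) le).
rewrite big_mkcond /=; apply: eq_bigr => i _.
case: ifP => // /negbT; rewrite -leqNgt => H.
by rewrite nth_default // mul0r.
Qed.

Lemma skevD (L : finFieldType) (th : {rmorphism L -> L}) (p q : {poly L}) (z a : L) :
  skev th (p + q) z a = skev th p z a + skev th q z a.
Proof.
set N := maxn (size p) (size q).
rewrite !(@skev_widen _ _ _ _ _ N) ?leq_maxl ?leq_maxr ?size_polyD //.
by rewrite -big_split; apply: eq_bigr => i _; rewrite coefD mulrDl.
Qed.

Lemma skevN (L : finFieldType) (th : {rmorphism L -> L}) (p : {poly L}) (z a : L) :
  skev th (- p) z a = - skev th p z a.
Proof.
rewrite !(@skev_widen _ _ _ _ _ (size p)) ?size_polyN //.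
by rewrite -sumrN; apply: eq_bigr => i _; rewrite coefN mulNr.
Qed.

Lemma skevZX (L : finFieldType) (th : {rmorphism L -> L}) (x : L) d (z a : L) :
  skev th (x *: 'X^d) z a = x * Dop th a d z.
Proof.
rewrite (@skev_widen _ _ _ _ _ d.+1); last first.
  by apply: leq_trans (size_scale_leq _ _) _; rewrite size_polyXn.
rewrite big_ord_recr /= big1 ?add0r; first by rewrite coefZ coefXn eqxx mulr1.
by move=> i _; rewrite coefZ coefXn (_ : (i == d :> nat) = false) ?mulr0 ?mul0r //; apply/negbTE; rewrite neq_ltn ltn_ord.
Qed.

Lemma skev0p (L : finFieldType) (th : {rmorphism L -> L}) (z a : L) : skev th 0 z a = 0.
Proof. by rewrite /skev size_poly0 big_ord0. Qed.

Lemma skevp0 (L : finFieldType) (th : {rmorphism L -> L}) (g : {poly L}) (a : L) : skev th g 0 a = 0.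
Proof. by rewrite /skev big1 // => i _; rewrite Dop0 mulr0. Qed.

Lemma skdiv (L : finFieldType) (th : {rmorphism L -> L}) (c : L) (g : {poly L}) :
  exists (h : {poly L}) (r : L), size h = (size g).-1 /\
    forall a z, skev th g z a = skev th h (th z * a - c * z) a + r * z.
Proof.
move: {2}(size g) (leqnn (size g)) => n; elim: n g => [|n IH] g Hg.
  exists 0, 0; split; first by rewrite size_poly0; move: Hg; case: (size g).
  move=> a z; have /eqP -> : g == 0 by rewrite -size_poly_eq0 -leqn0.
  by rewrite !skev0p mul0r addr0.
case: (leqP (size g) 1) => [H1|H2].
  exists 0, g`_0; split; first by rewrite size_poly0; move: H1; case: (size g) => // [] [].
  move=> a z; rewrite skev0p add0r (@skev_widen _ _ _ _ _ _ H1) big_ord1.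
  done.
set d := (size g).-2.
have Hsg : size g = d.+2 by rewrite /d; lia.
set lc := lead_coef g.
have lc0 : lc != 0.
  by rewrite lead_coef_eq0 -size_poly_eq0 Hsg.
set g' := g - lc *: 'X^(d.+1) + (lc * iter d th c) *: 'X^d.
have Hg' : (size g' <= d.+1)%N.
  apply/leq_sizeP => j Hj; rewrite /g' !coefD coefN !coefZ !coefXn.
  have Hjd : (j == d) = false by apply/negbTE; lia.
  rewrite Hjd mulr0 addr0.
  case: (eqVneq j d.+1) => [->|ne].
    by rewrite ?eqxx mulr1 /lc lead_coefE Hsg subrr.
  rewrite mulr0 subr0 nth_default // Hsg; lia.
have Hgn : (size g' <= n)%N by apply: leq_trans Hg' _; move: Hg; rewrite Hsg.
have [h' [r' [Hh' Hev]]] := IH g' Hgn.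
exists (lc *: 'X^d + h'), r'; split.
  rewrite size_polyDl ?size_scale // ?size_polyXn ?Hsg //.
  by rewrite Hh'; move: Hg'; case: (size g') => //= m; lia.
move=> a z.
have Eg : g = g' + lc *: 'X^(d.+1) - (lc * iter d th c) *: 'X^d.
  by rewrite /g'; ring.
clearbody g'.
rewrite {1}Eg !skevD skevN !skevZX Hev DopD -DopSr DopN DopM.
ring.
Qed.

Lemma skmul0r (L : finFieldType) (th : {rmorphism L -> L}) (p : {poly L}) : skmul th p 0 = 0.
Proof.
apply/polyP => i; rewrite coef_poly coef0; case: ifP => // _.
by apply: big1 => j _; rewrite coef0 iter_th0 mulr0.
Qed.

Lemma skmul0l (L : finFieldType) (th : {rmorphism L -> L}) (q : {poly L}) : skmul th 0 q = 0.
Proof.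
apply/polyP => i; rewrite coef_poly coef0; case: ifP => // _.
by apply: big1 => j _; rewrite coef0 mul0r.
Qed.

Lemma skmulN1 (L : finFieldType) (th : {rmorphism L -> L}) (p : {poly L}) : skmul th p (-1) = - p.
Proof.
apply/polyP => i; rewrite coef_poly coefN size_polyN size_poly1 addn1 /=.
case: ltnP => Hi; last by rewrite nth_default ?oppr0.
rewrite big_ord_recr /= subnn coefN coef1 eqxx iter_thN1 mulrN1 big1 ?add0r //.
move=> j _; rewrite coefN coef1 (_ : (i - j == 0)%N = false) ?oppr0 ?iter_th0 ?mulr0 //.
by apply/negbTE; rewrite subn_eq0 -ltnNge ltn_ord.
Qed.

Lemma size_skmul_le (L : finFieldType) (th : {rmorphism L -> L}) (p q : {poly L}) :
  (size (skmul th p q) <= (size p + size q).-1)%N.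
Proof. exact: size_poly. Qed.

Lemma size_skmul (L : finFieldType) (th : {rmorphism L -> L}) (p q : {poly L}) :
  p != 0 -> q != 0 -> size (skmul th p q) = (size p + size q).-1.
Proof.
move=> p0 q0; rewrite /skmul size_poly_eq //.
have sp : (0 < size p)%N by rewrite size_poly_gt0.
have sq : (0 < size q)%N by rewrite size_poly_gt0.
set dp := (size p).-1; set dq := (size q).-1.
have Ep : size p = dp.+1 by rewrite /dp prednK.
have Eq : size q = dq.+1 by rewrite /dq prednK.
have -> : (size p + size q).-1.-1 = (dp + dq)%N by rewrite Ep Eq; lia.
have Hdp : (dp < (dp + dq).+1)%N by lia.
rewrite (bigD1 (Ordinal Hdp)) //= big1 ?addr0.
  have -> : (dp + dq - dp = dq)%N by lia.
  rewrite mulf_neq0 ?iter_th_neq0 //.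
    by move: p0; rewrite -lead_coef_eq0 lead_coefE.
  by move: q0; rewrite -lead_coef_eq0 lead_coefE.
move=> j /eqP ne.
have ne' : (val j != dp) by apply/eqP => E; apply: ne; apply: val_inj.
case: (ltngtP j dp) ne' => // Hj _.
  by rewrite (@nth_default _ _ q) ?iter_th0 ?mulr0 // Eq; lia.
by rewrite nth_default ?mul0r // Ep.
Qed.

Definition indep {L : finFieldType} (th : {rmorphism L -> L}) (v : seq L) : Prop :=
  forall k : seq L, size k = size v -> all (fixedb th) k ->
    \sum_(i < size v) k`_i * v`_i = 0 -> all (eq_op^~ 0) k.

Lemma fq_indep_indep (L : finFieldType) (th : {rmorphism L -> L}) (v : seq L) :
  fq_indep th v -> indep th v.
Proof.
move=> /forallP H k Hk kf ks; have Hk' : size k == size v by apply/eqP.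
have := H (Tuple Hk'); rewrite /= kf ks eqxx /=.
by [].

Qed.

Lemma indep_nz (L : finFieldType) (th : {rmorphism L -> L}) b (s : seq L) :
  indep th (b :: s) -> b != 0.
Proof.
move=> H; apply/eqP => b0.
have := H (1 :: nseq (size s) 0); rewrite /= size_nseq => /(_ erefl).
have -> : all (fixedb th) (nseq (size s) 0).
  by apply/allP => x; rewrite mem_nseq => /andP [_ /eqP ->]; rewrite /fixedb rmorph0.
rewrite /fixedb rmorph1 eqxx big_ord_recl /= b0 mulr0 add0r big1.
  by move=> /(_ isT erefl); rewrite oner_eq0.
by move=> i _ /=; rewrite nth_nseq; case: ifP; rewrite mul0r.
Qed.

Definition klin {L : finFieldType} (th : {rmorphism L -> L}) (phi : L -> L) :=
  [/\ forall x y, phi (x + y) = phi x + phi y, phi 0 = 0 &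
      forall u z, fixedb th u -> phi (u * z) = u * phi z].

Lemma klin_sum (L : finFieldType) (th : {rmorphism L -> L}) phi (s : seq L) (k : seq L) :
  klin th phi -> all (fixedb th) k -> size k = size s ->
  \sum_(i < size s) k`_i * (map phi s)`_i = phi (\sum_(i < size s) k`_i * s`_i).
Proof.
move=> [pD p0 pM] kf ks.
rewrite (big_morph phi pD p0); apply: eq_bigr => i _.
rewrite (nth_map 0) // pM //.
by apply: (allP kf); apply: mem_nth; rewrite ks.
Qed.

Lemma indep_map_inj (L : finFieldType) (th : {rmorphism L -> L}) phi (s : seq L) :
  indep th s -> klin th phi -> (forall z, phi z = 0 -> z = 0) -> indep th (map phi s).
Proof.
move=> Hs Hl Hinj k; rewrite size_map => ks kf.
rewrite (@klin_sum _ _ _ _ _ Hl) // => /Hinj; exact: Hs.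
Qed.

Lemma indep_map_ker (L : finFieldType) (th : {rmorphism L -> L}) phi b (s : seq L) :
  indep th (b :: s) -> klin th phi ->
  (forall z, phi z = 0 -> exists u, fixedb th u /\ z = u * b) -> indep th (map phi s).
Proof.
move=> Hs Hl Hker k; rewrite size_map => ks kf.
rewrite (@klin_sum _ _ _ _ _ Hl) // => /Hker [u [fu Eu]].
have := Hs ((- u) :: k); rewrite /= ks => /(_ erefl).
rewrite kf andbT /fixedb rmorphN (eqP fu) eqxx big_ord_recl /=.
have -> : \sum_(i < size s) ((- u) :: k)`_(lift ord0 i) * (b :: s)`_(lift ord0 i)
   = \sum_(i < size s) k`_i * s`_i by apply: eq_bigr => i _; rewrite lift0.
by rewrite Eu mulNr addNr => /(_ isT erefl) /andP [].

Qed.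

Lemma rootsT (L : finFieldType) (th : {rmorphism L -> L}) (l : nat) (xi : 'I_l -> L) :
  (forall i, xi i != 0) -> (forall i j, i != j -> ~ conjugate th (xi i) (xi j)) ->
  forall N (bs : 'I_l -> seq L) (g : {poly L}),
  (\sum_(i < l) size (bs i))%N = N -> (forall i, indep th (bs i)) ->
  (forall i z, z \in bs i -> skev th g z (xi i) = 0) -> g != 0 -> (N < size g)%N.
Proof.
move=> xinz nconj N; elim: N => [|N IH] bs g Hsum Hind Hroot g0.
  by rewrite size_poly_gt0.
case: (pickP (fun i => 0 < size (bs i))%N) => [i0 Hi0 | H0]; last first.
  move: Hsum; rewrite big1 // => i _; move: (H0 i) => /=.
  by rewrite lt0n => /negbFE /eqP.
case Ebs: (bs i0) Hi0 => [|b rest] // _.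
have bnz : b != 0 by apply: (@indep_nz _ th _ rest); rewrite -Ebs.
set a0 := xi i0.
have a0nz : a0 != 0 by apply: xinz.
set c := th b * a0 / b.
have [h [r [Hh Hev]]] := @skdiv _ th c g.
have Hrb : skev th g b a0 = 0 by apply: Hroot; rewrite Ebs mem_head.
have Hphi0 : th b * a0 - c * b = 0 by rewrite /c divfK // subrr.
have r0 : r = 0.
  move: Hrb; rewrite Hev Hphi0 skevp0 add0r => /eqP.
  by rewrite mulf_eq0 (negbTE bnz) orbF => /eqP.
have sg2 : (1 < size g)%N.
  case: (leqP (size g) 1) => [Hs1|//]; exfalso.
  move: Hrb; rewrite (@skev_widen _ _ _ _ _ _ Hs1) big_ord1 /Dop /=.
  have sg1 : size g = 1%N by move: Hs1 g0; rewrite -size_poly_gt0; lia.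
  apply/eqP; rewrite mulf_neq0 //.
  by move: g0; rewrite -lead_coef_eq0 lead_coefE sg1.
pose phi := fun a z => th z * a - c * z.
have Hl : forall a, klin th (phi a).
  move=> a; split.
  - by move=> x y; rewrite /phi rmorphD; ring.
  - by rewrite /phi rmorph0 mul0r mulr0 subr0.
  - by move=> u z /eqP fu; rewrite /phi rmorphM fu; ring.
pose bs' := fun i => if i == i0 then map (phi (xi i)) rest else map (phi (xi i)) (bs i).
have : (N < size h)%N.
  apply: (IH bs').
  - move: Hsum; rewrite (bigD1 i0) //= Ebs /= => Hsum.
    rewrite (bigD1 i0) //= /bs' eqxx size_map.
    have -> : (\sum_(i < l | i != i0) size (if i == i0 then [seq phi (xi i) i0 | i0 <- rest]
               else [seq phi (xi i) i0 | i0 <- bs i]))%N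
            = (\sum_(i < l | i != i0) size (bs i))%N.
      by apply: eq_bigr => i /negbTE ->; rewrite size_map.
    by move: Hsum; rewrite addSn => -[<-].
  - move=> i; rewrite /bs'; case: eqP => [->|/eqP ne].
      apply: (@indep_map_ker _ _ _ b); first by rewrite -Ebs.
        exact: Hl.
      move=> z; rewrite /phi => /eqP; rewrite subr_eq0 => /eqP Ez.
      exists (z / b); split; last by rewrite divfK.
      have thz : th z = th b * z / b.
        apply: (mulIf a0nz); rewrite Ez /c -/a0.
        ring.
      have thbnz : th b != 0 by rewrite fmorph_eq0.
      by rewrite /fixedb fmorph_div /= thz mulrAC [th b * z / th b]mulrAC mulfV // mul1r.
    apply: indep_map_inj; [exact: Hind | exact: Hl |].
    move=> z; rewrite /phi => /eqP; rewrite subr_eq0 => /eqP Ez.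
    case: (eqVneq z 0) => // znz; exfalso; apply: (nconj i0 i); first by rewrite eq_sym.
    have thznz : th z != 0 by rewrite fmorph_eq0.
    exists (b / z); split; first by rewrite mulf_neq0 ?invr_eq0.
    rewrite fmorph_div /= -/a0.
    have -> : xi i = c * z / th z by rewrite -Ez mulrC mulKf.
    rewrite /c.
    by rewrite invf_div; ring.
  - move=> i z; rewrite /bs'; case: eqP => [->|_] /mapP [w Hw ->].
      have := Hev (xi i0) w; rewrite r0 mul0r addr0 => <-.
      by apply: Hroot; rewrite Ebs inE Hw orbT.
    have := Hev (xi i) w; rewrite r0 mul0r addr0 => <-.
    by apply: Hroot.
  - by rewrite -size_poly_gt0 Hh; lia.
rewrite Hh; lia.
Qed.

Lemma sum_ifval (V : zmodType) M t (A : V) : (t < M)%N ->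
  \sum_(r < M) (if val r == t then A else 0) = A.
Proof.
move=> Ht; rewrite (bigD1 (Ordinal Ht)) //= eqxx big1 ?addr0 // => r ne.
case: eqP => // E; move: ne; suff -> : r = Ordinal Ht by rewrite eqxx.
exact: val_inj.
Qed.

Lemma deg_chi (L : finFieldType) (th : {rmorphism L -> L}) (sg fj Rj Gj chij : {poly L})
  n k (D : rat) :
  sg != 0 -> Gj != 0 -> (n < size Gj)%N -> (size Rj <= n)%N -> (0 < k)%N ->
  skmul th sg fj = skmul th chij Gj + skmul th sg Rj ->
  (skmul th sg fj != 0 -> (((size (skmul th sg fj)).-1)%:Z + 0)%:~R < D) ->
  ((((size sg).-1)%:Z + (k%:Z - 1))%:~R < D) ->
  chij != 0 -> (((size chij).-1)%:Z + 0)%:~R < D.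
Proof.
move=> sg0 G0 HG HR Hk Hchi Hf Hsg c0.
have E : skmul th chij Gj = skmul th sg fj - skmul th sg Rj by rewrite Hchi addrK.
have Hs := @size_skmul _ th _ _ c0 G0.
have Hle : (size (skmul th sg fj - skmul th sg Rj)%R <=
   maxn (size (skmul th sg fj)) (size (skmul th sg Rj)))%N.
  by rewrite -(size_polyN (skmul th sg Rj)); apply: size_polyD.
have HsR := @size_skmul_le _ th sg Rj.
have s1 : (0 < size sg)%N by rewrite size_poly_gt0.
have c1 : (0 < size chij)%N by rewrite size_poly_gt0.
rewrite -E Hs in Hle.
case: (leqP (size chij + n) (size (skmul th sg fj))) => HX.
  have f0 : skmul th sg fj != 0.
    by rewrite -size_poly_gt0; apply: leq_trans HX; lia.
  apply: le_lt_trans (Hf f0); rewrite ler_int; lia.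
apply: le_lt_trans Hsg; rewrite ler_int.
have : (size chij <= (size sg).-1)%N.
  move: Hle HsR; lia.
lia.
Qed.

Lemma vecmul_eq (L : finFieldType) (th : {rmorphism L -> L}) s (sg : {poly L})
  (f chi R G : 'I_s -> {poly L}) (j : 'I_s) :
  vecmul th (rhochi_vec th sg f chi) (W_mat R G) j =
  - skmul th sg (f j) + skmul th sg (R j) + skmul th (chi j) (G j).
Proof.
have Hpt : forall r : 'I_(2 * s).+1,
  skmul th (rhochi_vec th sg f chi r) (W_mat R G r j) =
  (if val r == val j then - skmul th sg (f j) else 0) +
  (if val r == s then skmul th sg (R j) else 0) +
  (if val r == (s.+1 + val j)%N then skmul th (chi j) (G j) else 0).
  move=> r; rewrite /rhochi_vec /W_mat.
  have jl : (val j < s)%N := ltn_ord j.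
  case: insubP => [u Hu Eu | Hn].
    have Hu' : (val r < s)%N by [].
    have E1 : (val r == s) = false by apply/negbTE; lia.
    have E2 : (val r == (s.+1 + val j)%N) = false by apply/negbTE; lia.
    rewrite Hu' E1 E2 !addr0; case: (eqVneq (val r) (val j)) => [E|ne].
      by rewrite skmulN1; congr (- skmul _ _ (f _)); apply: val_inj; rewrite Eu E.
    by rewrite skmul0r.
  have Hn' : (val r < s)%N = false by apply/negbTE.
  rewrite Hn'; case: (eqVneq (val r) s) => [Es|Ns].
    have E1 : (val r == val j) = false by apply/negbTE; lia.
    have E2 : (val r == (s.+1 + val j)%N) = false by apply/negbTE; lia.
    by rewrite E1 E2 add0r addr0.
  have E1 : (val r == val j) = false by apply/negbTE; move: (negbT Hn'); rewrite -leqNgt; lia.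
  rewrite E1 add0r add0r.
  have rl : (val r < (2 * s).+1)%N := ltn_ord r.
  case: insubP => [u Hu Eu | Hn2]; last first.
    exfalso; move: Hn2 (negbT Hn') Ns rl; rewrite /= -!leqNgt; lia.
  case: (eqVneq (val r - s.+1)%N (val j)) => [E|ne].
    have E2 : (val r == (s.+1 + val j)%N) = true by apply/eqP; move: (negbT Hn') Ns; rewrite -leqNgt; lia.
    by rewrite E2; congr (skmul _ (chi _) _); apply: val_inj; rewrite Eu E.
  have E2 : (val r == (s.+1 + val j)%N) = false by apply/negbTE; move: (negbT Hn') Ns ne; rewrite -leqNgt; lia.
  by rewrite E2 skmul0r.
rewrite /vecmul (eq_bigr _ (fun r _ => Hpt r)) !big_split /=.
have jl : (val j < s)%N := ltn_ord j.
have h1 : (val j < (2 * s).+1)%N by lia.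
have h2 : (s < (2 * s).+1)%N by lia.
have h3 : (s.+1 + val j < (2 * s).+1)%N by lia.
by rewrite !sum_ifval.
Qed.

Theorem lemma2 (L : finFieldType) (th : {rmorphism L -> L})
  (s l : nat) (nn : 'I_l -> nat) (k : nat)
  (xi : 'I_l -> L)
  (beta : 'I_s -> forall i : 'I_l, 'rV[L]_(nn i))
  (f : 'I_s -> {poly L})
  (c e : 'I_s -> forall i : 'I_l, 'rV[L]_(nn i))
  (tt : 'I_l -> nat) (a : forall i : 'I_l, 'rV[L]_(tt i))
  (B : 'I_s -> forall i : 'I_l, 'M[L]_(tt i, nn i))
  (sigma : {poly L}) (G R chi : 'I_s -> {poly L}) :
  let n := (\sum_(i < l) nn i)%N in
  let D : rat := s%:R / s.+1%:R * (n%:R - k%:R) in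
  let d : nat := `|(n%:Z + Num.ceil D)%R|%N in
  (0 < s)%N ->
  (forall i, 0 < nn i)%N ->
  (0 < k)%N -> (k <= n)%N ->
  (* xi : representatives of pairwise distinct nontrivial conjugacy classes *)
  (forall i, xi i != 0) ->
  (forall i j, i != j -> ~ conjugate th (xi i) (xi j)) ->
  (* each block of each beta_j has F_q-linearly independent entries *)
  (forall j i, fq_indep th [seq beta j i ord0 p | p <- enum 'I_(nn i)]) ->
  (* c is an HILRS codeword with message polynomials f_1..f_s of degree < k *)
  (forall j, (size (f j) <= k)%N) ->
  (forall j i, c j i = skevrow th (f j) (beta j i) (xi i)) ->
  (* error weight t <= s/(s+1) (n-k) *)
  ((sr_wt th e)%:R <= D) ->
  (* error values a^(i), B_j^(i) *)
  (forall i, tt i = rkq th (fun p : 'I_s * 'I_(nn i) => e p.1 i ord0 p.2)) ->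
  (forall i, fq_indep th [seq a i ord0 p | p <- enum 'I_(tt i)]) ->
  (forall j i r p, fixedb th (B j i r p)) ->
  (forall j i, e j i = a i *m B j i) ->
  (forall i, \rank (\mxrow_(j < s) B j i) = tt i) ->
  (* sigma : error-span polynomial *)
  sigma \is monic ->
  (forall i, skevrow th sigma (a i) (xi i) = 0) ->
  (forall g, g != 0 -> (forall i, skevrow th g (a i) (xi i) = 0) ->
     (size sigma <= size g)%N) ->
  (* G_j : minimal polynomials *)
  (forall j, G j \is monic) ->
  (forall j i, skevrow th (G j) (beta j i) (xi i) = 0) ->
  (forall j g, g != 0 -> (forall i, skevrow th g (beta j i) (xi i) = 0) ->
     (size (G j) <= size g)%N) ->
  (* R_j : interpolation polynomials of y_j = c_j + e_j *)
  (forall j, (size (R j) <= n)%N) ->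
  (forall j i, skevrow th (R j) (beta j i) (xi i) = c j i + e j i) ->
  (* chi_j *)
  (forall j, skmul th sigma (f j) = skmul th (chi j) (G j) + skmul th sigma (R j)) ->
  ((forall j, vecmul th (rhochi_vec th sigma f chi) (W_mat R G) j = 0)
    /\ rdeg_lt (@w_shift s k) (rho_vec th sigma f) D)
  <->
  ((forall j, rmod_zero th d (vecmul th (rhochi_vec th sigma f chi) (W_mat R G) j))
    /\ rdeg_lt (@v_shift s k) (rhochi_vec th sigma f chi) D).
Proof.
move=> n D d Hs Hnn Hk Hkn Hxi Hconj Hbeta Hf Hc Hwt Htt Ha HB He Hrk Hsm Hsv Hsmin
  HGm HGv HGmin HRs HRv Hchi.
have Hvm : forall j, vecmul th (rhochi_vec th sigma f chi) (W_mat R G) j = 0.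
  by move=> j; rewrite vecmul_eq Hchi; ring.
have sigma0 : sigma != 0 := monic_neq0 Hsm.
have HG : forall j, (n < size (G j))%N.
  move=> j; apply: (@rootsT _ th l xi Hxi Hconj n
    (fun i => [seq beta j i ord0 p | p <- enum 'I_(nn i)]) (G j)).
  - by apply: eq_bigr => i _; rewrite size_map size_enum_ord.
  - by move=> i; apply: fq_indep_indep; apply: Hbeta.
  - move=> i z /mapP [p _ ->].
    by have := HGv j i; move/matrixP/(_ ord0 p); rewrite !mxE.
  - exact: monic_neq0 (HGm j).
have rho_low : forall (r : 'I_(2 * s).+1) (r' : 'I_s.+1), val r = val r' ->
    rhochi_vec th sigma f chi r = rho_vec th sigma f r' /\ v_shift k r = w_shift k r'.
  move=> r r' E; rewrite /rhochi_vec /rho_vec /v_shift /w_shift E; split => //.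
  case: insubP => // Hn.
  have rl : (val r' < s.+1)%N := ltn_ord r'.
  move: Hn rl; rewrite /= -leqNgt.
  move=> H1 H2; have -> : (nat_of_ord r' == s) = true by apply/eqP; lia.
  by [].
have rho_high : forall r : 'I_(2 * s).+1, (s < val r)%N ->
    exists j : 'I_s, rhochi_vec th sigma f chi r = chi j /\ v_shift k r = 0.
  move=> r Hr; have rl : (val r < (2 * s).+1)%N := ltn_ord r.
  have Hj : (val r - s.+1 < s)%N by lia.
  exists (Ordinal Hj); rewrite /rhochi_vec /v_shift.
  have E1 : (val r == s) = false by apply/negbTE; lia.
  rewrite E1; split => //.
  case: insubP => [u Hu _|_]; first by exfalso; move: Hu Hr => /= Hu Hr; lia.
  case: insubP => [u _ Eu|Hn]; last by rewrite Hj in Hn.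
  by congr chi; apply: val_inj; rewrite Eu.
have rv_low : forall (j : 'I_s) (H : (val j < s.+1)%N),
    rho_vec th sigma f (Ordinal H) = skmul th sigma (f j) /\ w_shift k (Ordinal H) = 0.
  move=> j H; have jl : (val j < s)%N := ltn_ord j.
  rewrite /rho_vec /w_shift /=.
  case: insubP => [u _ Eu|Hn]; last by rewrite jl in Hn.
  split; first by congr skmul; congr f; apply: val_inj; rewrite Eu.
  by rewrite (_ : (val j == s) = false) //; apply/negbTE; lia.
have rv_top : rho_vec th sigma f ord_max = sigma /\ w_shift k (@ord_max s) = k%:Z - 1.
  rewrite /rho_vec /w_shift /=.
  by case: insubP => [u Hu _|_]; [rewrite /= ltnn in Hu | rewrite eqxx].
split.
- move=> [_ Hrho]; split.
    by move=> j; rewrite Hvm; exists 0; rewrite skmul0l.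
  move=> r Hr; case: (leqP (val r) s) => Hrs.
    have Hr' : (val r < s.+1)%N by [].
    have [E1 E2] := rho_low r (Ordinal Hr') erefl.
    by rewrite E1 E2 in Hr *; apply: Hrho.
  have [j [E1 E2]] := rho_high r Hrs.
  rewrite E1 E2 in Hr *.
  have Hj' : (val j < s.+1)%N by apply: ltnW; apply: (ltn_ord j).
  apply: (@deg_chi _ th sigma (f j) (R j) (G j) (chi j) n k D sigma0
    (monic_neq0 (HGm j)) (HG j) (HRs j) Hk (Hchi j) _ _ Hr).
    move=> nz; have [E3 E4] := rv_low j Hj'.
    by have := Hrho (Ordinal Hj'); rewrite E3 E4; apply.
  have [E3 E4] := rv_top.
  by have := Hrho ord_max; rewrite E3 E4; apply.
- move=> [_ Hv]; split; first by move=> j; rewrite Hvm.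
  move=> r Hr.
  have Hr' : (val r < (2 * s).+1)%N by apply: leq_trans (ltn_ord r) _; lia.
  have [E1 E2] := rho_low (Ordinal Hr') r erefl.
  by have := Hv (Ordinal Hr'); rewrite E1 E2; apply.
Qed.
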